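(* Let $\mathbb{F}$ be a field of characteristic $p>0$. Let $P(t,y),Q(t,y)\in\mathbb{F}[[t,y]]$ and $\varphi(t)\in\mathbb{F}[[t]]$ satisfy $P(t,y)=(y-\varphi(t))^{p^{\ell}e}\cdot Q(t,y)$ with $\ell\ge0$, $e\ge1$, $\gcd(p,e)=1$, $\varphi(0)=0$ and $Q(0,0)=\alpha\neq0$. Then $$\varphi(t)^{p^{\ell}}=\sum_{m\ge0}[y^{p^{\ell}(e(m+1)-2)}]\left(\frac{\mathcal{H}^{(p^{\ell})}_y(P)(t,y)}{e\cdot\alpha^{m+1}}\big(\alpha y^{p^{\ell}e}-P(t,y)\big)^m\right).$$ Moreover, for every $d\ge0$, $$\mathrm{Hom}_{\le d}\big[\varphi(t)^{p^{\ell}}\big]=\mathrm{Hom}_{\le d}\left[\sum_{m=0}^{2e(d+p^{\ell})}[y^{p^{\ell}(e(m+1)-2)}]\left(\frac{\mathcal{H}^{(p^{\ell})}_y(P)(t,y)}{e\cdot\alpha^{m+1}}\big(\alpha y^{p^{\ell}e}-P(t,y)\big)^m\right)\right].$$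
   Context: $\mathcal{H}^{(i)}_y(F)$, the Hasse derivative of order $i$ with respect to $y$, is the coefficient of $z^i$ in $F(t,y+z)$. For $G\in\mathbb{F}[[t,y]]$, $[y^a](G)\in\mathbb{F}[[t]]$ is the coefficient of $y^a$ when $G$ is viewed as a power series in $y$ over $\mathbb{F}[[t]]$. $\mathrm{Hom}_{\le d}$ of a power series in $t$ is its truncation to terms of degree at most $d$. *)

(* Defs.v *)
(* Formal power series are represented by their coefficient
   functions: F[[t]] as nat -> F (coefficient of t^i),
   F[[t,y]] as nat -> nat -> F (coefficient of t^i y^j). *)
From mathcomp Require Import all_boot all_order all_algebra.
Set Implicit Arguments. Unset Strict Implicit. Unset Printing Implicit Defensive.
Import Order.TTheory GRing.Theory Num.Theory.
Local Open Scope ring_scope.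

Section PS.
Variable F : fieldType.

Definition ps1 := nat -> F.
Definition ps2 := nat -> nat -> F.

Definition ps2_add (A B : ps2) : ps2 := fun i j => A i j + B i j.
Definition ps2_opp (A : ps2) : ps2 := fun i j => - A i j.
Definition ps2_sub (A B : ps2) : ps2 := ps2_add A (ps2_opp B).
Definition ps2_scale (c : F) (A : ps2) : ps2 := fun i j => c * A i j.
Definition ps2_mul (A B : ps2) : ps2 := fun i j =>
  \sum_(a < i.+1) \sum_(b < j.+1) A a b * B (i - a)%N (j - b)%N.
Definition ps2_one : ps2 := fun i j => if (i == 0%N) && (j == 0%N) then 1 else 0.
Definition ps2_exp (A : ps2) (n : nat) : ps2 := iter n (ps2_mul A) ps2_one.
Definition ps2_ypow (n : nat) : ps2 := fun i j => if (i == 0%N) && (j == n) then 1 else 0.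
Definition ps2_of_t (f : ps1) : ps2 := fun i j => if j == 0%N then f i else 0.

Definition ps1_one : ps1 := fun i => if i == 0%N then 1 else 0.
Definition ps1_mul (f g : ps1) : ps1 := fun i => \sum_(a < i.+1) f a * g (i - a)%N.
Definition ps1_exp (f : ps1) (n : nat) : ps1 := iter n (ps1_mul f) ps1_one.

(* Hasse derivative of order k w.r.t. y: the coefficient of z^k in A(t, y+z),
   written out coefficientwise: [t^i y^j] = binom(j+k, k) * [t^i y^(j+k)] A *)
Definition hasse_y (k : nat) (A : ps2) : ps2 := fun i j =>
  ('C(j + k, k))%:R * A i (j + k)%N.

Definition coef_y (a : int) (G : ps2) : ps1 := fun i =>
  match a with Posz n => G i n | Negz _ => 0 end.

Definition hom_le (d : nat) (f : ps1) : ps1 := fun i => if (i <= d)%N then f i else 0.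

Definition ps1_sum (n : nat) (u : nat -> ps1) : ps1 := fun i => \sum_(m < n) u m i.

(* t-adic convergence of the series sum_m u m to L *)
Definition ps1_series_to (u : nat -> ps1) (L : ps1) : Prop :=
  forall i, exists N, forall M, (N <= M)%N -> ps1_sum M u i = L i.

Definition corA4_term (p l e : nat) (alpha : F) (P : ps2) (m : nat) : ps1 :=
  coef_y ((p ^ l)%:Z * ((e * m.+1)%:Z - 2))
    (ps2_scale ((e%:R * alpha ^+ m.+1)^-1)
       (ps2_mul (hasse_y (p ^ l) P)
          (ps2_exp (ps2_sub (ps2_scale alpha (ps2_ypow (p ^ l * e))) P) m))).

End PS.

(* Main.v *)
Require Import Defs.
From mathcomp Require Import all_boot all_order all_algebra.
From mathcomp Require Import zify ring.
From Stdlib Require Import FunctionalExtensionality.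
Set Implicit Arguments. Unset Strict Implicit. Unset Printing Implicit Defensive.
Import Order.TTheory GRing.Theory Num.Theory.
Local Open Scope ring_scope.

Section Rep.
Variable F : fieldType.
Local Notation R := {poly {poly F}}.

Definition rep (N : nat) (A : ps2 F) (X : R) :=
  forall i j, (i < N)%N -> (j < N)%N -> A i j = X`_j`_i.

Lemma repM N A B X Y : rep N A X -> rep N B Y -> rep N (ps2_mul A B) (X * Y).
Proof.
move=> hA hB i j hi hj; rewrite /ps2_mul coefM coef_sum.
rewrite exchange_big /=; apply: eq_bigr => b _.
rewrite coefM; apply: eq_bigr => a _.
have ha := ltn_ord a; have hb := ltn_ord b.
rewrite hA ?hB //; lia.
Qed.

Lemma rep_one N : rep N (ps2_one F) 1.
Proof. by move=> i j _ _; rewrite /ps2_one coef1; case: j => [|j] /=; rewrite ?coef1 ?coef0 //; case: i. Qed.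

Lemma repX N A X k : rep N A X -> rep N (ps2_exp A k) (X ^+ k).
Proof.
move=> h; elim: k => [|k IH]; first exact: rep_one.
by rewrite exprS /ps2_exp iterS; apply: repM.
Qed.

Lemma repD N A B X Y : rep N A X -> rep N B Y -> rep N (ps2_add A B) (X + Y).
Proof. by move=> hA hB i j hi hj; rewrite /ps2_add !coefD hA ?hB. Qed.

Lemma repN N A X : rep N A X -> rep N (ps2_opp A) (- X).
Proof. by move=> hA i j hi hj; rewrite /ps2_opp !coefN hA. Qed.

Lemma repB N A B X Y : rep N A X -> rep N B Y -> rep N (ps2_sub A B) (X - Y).
Proof. by move=> hA hB; apply: repD => //; apply: repN. Qed.

Lemma repZ N c A X : rep N A X -> rep N (ps2_scale c A) (c%:P%:P * X).
Proof. by move=> hA i j hi hj; rewrite /ps2_scale !coefCM hA. Qed.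

Lemma rep_ypow N n : rep N (ps2_ypow F n) 'X^n.
Proof.
move=> i j _ _; rewrite /ps2_ypow coefXn.
case: (j == n); rewrite ?coef1 ?coef0 ?andbT ?andbF //.
by case: i.
Qed.

Lemma rep_of_t N (f : ps1 F) (g : {poly F}) :
  (forall i, (i < N)%N -> f i = g`_i) -> rep N (ps2_of_t f) g%:P.
Proof.
move=> h i j hi _; rewrite /ps2_of_t coefC.
by case: j => [|j] //=; rewrite ?coef0 // h.
Qed.

Lemma rep_hasse N k A X : rep (N + k) A X -> rep N (hasse_y k A) (X^`N(k)).
Proof.
move=> h i j hi hj; rewrite /hasse_y coef_nderivn coefMn h; try lia.
by rewrite mulr_natl addnC.
Qed.

Lemma rep_le N M A X : (M <= N)%N -> rep N A X -> rep M A X.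
Proof. by move=> hMN h i j hi hj; apply: h; lia. Qed.

Lemma rep_tr N A : rep N A (\poly_(j < N) \poly_(i < N) A i j).
Proof. by move=> i j hi hj; rewrite coef_poly hj coef_poly hi. Qed.

Definition rep1 (N : nat) (f : ps1 F) (g : {poly F}) := forall i, (i < N)%N -> f i = g`_i.

Lemma rep1M N f h g k : rep1 N f g -> rep1 N h k -> rep1 N (ps1_mul f h) (g * k).
Proof.
move=> hf hh i hi; rewrite /ps1_mul coefM; apply: eq_bigr => a _.
have ha := ltn_ord a; rewrite hf ?hh //; lia.
Qed.

Lemma rep1X N f g k : rep1 N f g -> rep1 N (ps1_exp f k) (g ^+ k).
Proof.
move=> h; elim: k => [|k IH].
  by move=> i _; rewrite /ps1_exp /= /ps1_one coef1; case: i.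
by rewrite exprS /ps1_exp iterS; apply: rep1M.
Qed.

End Rep.

Section Blow.
Variable F : fieldType.
Local Notation R := {poly {poly F}}.

Definition iot : {rmorphism {poly F} -> R} :=
  horner_eval ('X * ('X : {poly F})%:P) \o map_poly (polyC \o polyC).
Definition beta : {rmorphism R -> R} := horner_eval ('X : R) \o map_poly iot.

Lemma iotaC c : iot c%:P = c%:P%:P.
Proof. by rewrite /iot /= horner_evalE map_polyC /= hornerC. Qed.
Lemma iotaX : iot 'X = 'X * ('X : {poly F})%:P.
Proof. rewrite /iot /= horner_evalE map_polyX; exact: hornerX. Qed.
Lemma betaC (a : {poly F}) : beta a%:P = iot a.
Proof. by rewrite /beta /= horner_evalE map_polyC /= hornerC. Qed.
Lemma betaX : beta 'X = 'X.
Proof. rewrite /beta /= horner_evalE map_polyX; exact: hornerX. Qed.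

Lemma coef_iota a c k : (iot a)`_c`_k = if c == k then a`_k else 0.
Proof.
elim/poly_ind: a c k => [|a d IH] c k.
  by rewrite rmorph0 !coef0; case: ifP.
rewrite rmorphD rmorphM iotaX iotaC !coefD coefC.
rewrite mulrA coefMC !coefMX !coefC.
case: c => [|c]; case: k => [|k]; rewrite /= ?coef0 ?coefC ?add0r ?addr0 //.
by rewrite eqSS; exact: IH.
Qed.

Lemma coef_beta X c a : (beta X)`_c`_a = if (a <= c)%N then X`_(c - a)`_a else 0.
Proof.
elim/poly_ind: X c a => [|X d IH] c a.
  by rewrite rmorph0 !coef0; case: ifP; rewrite ?coef0.
rewrite rmorphD rmorphM betaX betaC !coefD coefMX coef_iota coefMX coefC.
case: c => [|c] /=.
  by rewrite !coef0 !add0r; case: a.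
move: (IH c a) => /= ->.
case: (ltngtP a c.+1) => h.
- have -> : (c.+1 - a = (c - a).+1)%N by lia.
  by rewrite /= coef0 addr0 -ltnS h addr0.
- have -> : (a <= c)%N = false by lia.
  by rewrite addr0.
- rewrite h subnn /= ltnn !coef0 !add0r.
  by [].
Qed.
End Blow.
Arguments iot {F}.
Arguments beta {F}.

Section Taylor.
Variable A : comNzRingType.
Local Notation R := {poly A}.

Lemma horner_mapC_X (r : R) : (map_poly polyC r).['X] = r.
Proof.
elim/poly_ind: r => [|r c IH]; first by rewrite rmorph0 horner0.
rewrite rmorphD rmorphM /= map_polyX map_polyC /= hornerD hornerM hornerX hornerC.
by rewrite IH.
Qed.

Definition tay : {rmorphism R -> {poly R}} :=
  horner_eval (('X : R)%:P + 'X) \o map_poly (polyC \o polyC).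

Lemma coef_tay (p : R) k : (tay p)`_k = p^`N(k).
Proof.
rewrite /tay /= horner_evalE.
set n := maxn (size p) k.+1.
have inj : injective (polyC \o polyC : A -> {poly R}).
  by move=> x y /= /polyC_inj /polyC_inj.
have hs : (size (map_poly (polyC \o polyC) p) <= n)%N.
  by rewrite size_map_inj_poly // ?leq_maxl.
rewrite (nderiv_taylor_wide (mulrC _ _) hs) coef_sum.
have hk : (k < n)%N by rewrite leq_maxr.
rewrite (bigD1 (Ordinal hk)) //= big1 ?addr0.
  rewrite nderivn_map map_poly_comp horner_map horner_mapC_X coefMXn ltnn subnn coefC //.
move=> i hi; rewrite nderivn_map map_poly_comp horner_map horner_mapC_X coefMXn.
case: ltnP => // hik; rewrite coefC.
case: eqP => // h; case/eqP: hi; apply: val_inj => /=; lia.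
Qed.

Lemma tayX : tay 'X = ('X : R)%:P + 'X.
Proof. rewrite /tay /= horner_evalE map_polyX; exact: hornerX. Qed.
Lemma tayC (c : A) : tay c%:P = (c%:P)%:P.
Proof. by rewrite /tay /= horner_evalE map_polyC hornerC. Qed.

End Taylor.
Arguments tay {A}.

Lemma pchar_nat_exp (S : nzRingType) (p l : nat) :
  p \in [pchar S] -> [pchar S].-nat (p ^ l)%N.
Proof.
move=> hp; rewrite pnatX; apply/orP; left.
by rewrite pnatE ?(pcharf_prime hp).
Qed.

Lemma expand_binom (S : comNzRingType) (C x : S) (e : nat) :
  exists W, (C + x) ^+ e.+1 = C ^+ e.+1 + e.+1%:R * C ^+ e * x + x ^+ 2 * W.
Proof.
elim: e => [|e [W IH]]; first by exists 0; rewrite !expr1 expr0 mulr1 mul1r mulr0 addr0.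
exists (C * W + e.+1%:R * C ^+ e + x * W).
rewrite exprS IH !exprS -[in _.+2%:R]addn1 natrD; ring.
Qed.

Section Hasse.
Variable A : comNzRingType.
Local Notation R := {poly A}.
Variables (p l e : nat) (c : A) (Qp : R).
Hypothesis hp : p \in [pchar A].
Hypothesis he : (0 < e)%N.

Lemma hasse_main :
  (('X - c%:P) ^+ (p ^ l * e) * Qp)^`N(p ^ l) =
  (('X - c%:P) ^+ (p ^ l)) ^+ e * Qp^`N(p ^ l)
   + e%:R * (('X - c%:P) ^+ (p ^ l)) ^+ e.-1 * Qp.
Proof.
set q := (p ^ l)%N; set b := ('X - c%:P : R).
have hpS : p \in [pchar {poly R}] by rewrite !pchar_poly.
have hq : (0 < q)%N by rewrite expn_gt0 (prime_gt0 (pcharf_prime hp)).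
rewrite -[LHS]coef_tay rmorphM rmorphXn.
have -> : tay b = b%:P + 'X by rewrite rmorphB tayX tayC rmorphB /= addrAC.
rewrite exprM (exprDn_pchar _ _ (pchar_nat_exp l hpS)) -rmorphXn.
case: e he => [//|e'] _.
have [W ->] := expand_binom (b ^+ q)%:P ('X ^+ q) e'.
rewrite !mulrDl !coefD -!rmorphXn -!mulrA coefCM coef_tay.
rewrite mulr_natl [in LHS]mulr_natl coefMn coefCM coefXnM ltnn subnn coef_tay nderivn0.
rewrite mulrA -exprD coefXnM ifT; last lia.
by rewrite addr0.
Qed.
End Hasse.

Section Ord.
Variable A : comNzRingType.
Local Notation R := {poly {poly A}}.
Implicit Types X Y : R.

Definition vord (L : nat) (X : R) := forall c a, (c + a < L)%N -> X`_c`_a = 0.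

Lemma vordM L1 L2 X Y : vord L1 X -> vord L2 Y -> vord (L1 + L2) (X * Y).
Proof.
move=> hX hY c a h; rewrite coefM coef_sum big1 // => c1 _.
rewrite coefM big1 // => a1 _.
have h1 := ltn_ord c1; have h2 := ltn_ord a1.
case: (ltnP (c1 + a1) L1) => h3; first by rewrite hX // mul0r.
by rewrite hY ?mulr0 //; lia.
Qed.

Lemma vord0 X : vord 0 X.
Proof. by []. Qed.

Lemma vord_le L M X : (M <= L)%N -> vord L X -> vord M X.
Proof. by move=> hML h c a hca; apply: h; lia. Qed.

Lemma vordMl L X Y : vord L Y -> vord L (X * Y).
Proof. by move=> h; rewrite -[L]add0n; apply: vordM. Qed.
Lemma vordMr L X Y : vord L X -> vord L (X * Y).
Proof. by move=> h; rewrite mulrC; apply: vordMl. Qed.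

Lemma vordD L X Y : vord L X -> vord L Y -> vord L (X + Y).
Proof. by move=> hX hY c a h; rewrite !coefD hX ?hY ?addr0. Qed.
Lemma vordN L X : vord L X -> vord L (- X).
Proof. by move=> hX c a h; rewrite !coefN hX ?oppr0. Qed.
Lemma vordB L X Y : vord L X -> vord L Y -> vord L (X - Y).
Proof. by move=> hX hY; apply: vordD => //; apply: vordN. Qed.

Lemma vord1 X : X`_0`_0 = 0 -> vord 1 X.
Proof. by move=> h [|c] [|a] //. Qed.

Lemma vordX k X : vord 1 X -> vord k (X ^+ k).
Proof.
move=> h; elim: k => [|k IH]; first exact: vord0.
by rewrite exprS -add1n; apply: vordM.
Qed.

Definition c00 (X : R) := X`_0`_0.
Lemma c00M X Y : c00 (X * Y) = c00 X * c00 Y.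
Proof. by rewrite /c00 !coef0M. Qed.
Lemma c00X X k : c00 (X ^+ k) = c00 X ^+ k.
Proof. by elim: k => [|k IH]; rewrite ?expr0 ?exprS ?c00M ?IH // /c00 !coef1. Qed.

End Ord.



Lemma telescope (S : comNzRingType) (x : S) L :
  (1 - x) * (\sum_(k < L) x ^+ k) = 1 - x ^+ L.
Proof.
elim: L => [|L IH]; first by rewrite big_ord0 mulr0 expr0 subrr.
by rewrite big_ord_recr /= mulrDr IH exprS; ring.
Qed.

Lemma telescope2 (S : comNzRingType) (al a E : S) M : al * a = 1 ->
  (al - E) * (\sum_(m < M) a ^+ m.+1 * E ^+ m) = 1 - a ^+ M * E ^+ M.
Proof.
move=> h; elim: M => [|M IH]; first by rewrite big_ord0 mulr0 !expr0 mulr1 subrr.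
rewrite big_ord_recr /= mulrDr IH !exprS.
have -> : (al - E) * (a * a ^+ M * E ^+ M) = (al * a) * a ^+ M * E ^+ M - a * a ^+ M * (E * E ^+ M) by ring.
rewrite h; ring.
Qed.

Lemma coef_y_neg (F : fieldType) (z : int) (G : ps2 F) i : (z < 0)%R -> coef_y z G i = 0.
Proof. by case: z. Qed.



Section Main.
Variables (F : fieldType) (p : nat) (P Q : ps2 F) (phi : ps1 F) (l e : nat) (alpha : F).
Hypotheses (hp : p \in [pchar F]) (he : (0 < e)%N) (hcop : coprime p e)
  (hphi0 : phi 0%N = 0) (hQ : Q 0%N 0%N = alpha) (ha : alpha != 0)
  (hP : P = ps2_mul (ps2_exp (ps2_sub (ps2_ypow F 1) (ps2_of_t phi)) (p ^ l * e)) Q).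
Local Notation R := {poly {poly F}}.
Local Notation q := (p ^ l)%N.

Lemma q_gt0 : (0 < q)%N.
Proof. by rewrite expn_gt0 (prime_gt0 (pcharf_prime hp)). Qed.

Lemma e_neq0 : (e%:R : F) != 0.
Proof.
rewrite -(dvdn_pcharf hp) -prime_coprime ?(pcharf_prime hp) //.
Qed.

Lemma pcharR : p \in [pchar R].
Proof. by rewrite !pchar_poly. Qed.

Variables (i M : nat).
Hypothesis hM : (2 * i < M)%N.

Let N := (q * e * M + i + 1)%N.
Let N' := (N + q)%N.
Let g : {poly F} := \poly_(k < N') phi k.+1.
Let f : {poly F} := 'X * g.
Let Qp : R := \poly_(j < N') \poly_(k < N') Q k j.
Let b : R := 'X - f%:P.
Let Pp : R := b ^+ (q * e) * Qp.
Let Hp : R := Pp^`N(q).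
Let Dp : R := alpha%:P%:P * 'X^(q * e) - Pp.

Lemma rep1f : rep1 N' phi f.
Proof.
move=> [|k] hk; first by rewrite /f coefXM hphi0.
by rewrite /f coefXM /= /g coef_poly; case: ltnP => //; lia.
Qed.

Lemma repQ : rep N' Q Qp.
Proof. exact: rep_tr. Qed.

Lemma repP : rep N' P Pp.
Proof.
rewrite hP /Pp; apply: repM; last exact: repQ.
apply: repX; have -> : b = 'X^1 - f%:P by rewrite expr1.
apply: repB; first exact: rep_ypow.
apply: rep_of_t => k hk; exact: rep1f.
Qed.

Lemma repH : rep N (hasse_y q P) Hp.
Proof. by apply: rep_hasse; exact: repP. Qed.

Lemma repDp : rep N (ps2_sub (ps2_scale alpha (ps2_ypow F (q * e))) P) Dp.
Proof.
apply: repB; first by apply: repZ; apply: rep_ypow.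
by apply: (rep_le _ repP); rewrite /N'; lia.
Qed.


Let v : R := ('X : {poly F})%:P.
Let G : R := iot g.
Let V1 : R := 1 - v * G.
Let Qt : R := beta Qp.
Let K : R := b ^+ q * Qp^`N(q) + e%:R * Qp.
Let E : R := alpha%:P%:P - V1 ^+ (q * e) * Qt.
Let Z (m : nat) : R := V1 ^+ (q * e.-1) * beta K * E ^+ m.

Lemma beta_b : beta b = 'X * V1.
Proof. by rewrite /b rmorphB betaX betaC /f rmorphM iotaX /V1 /G /v; ring. Qed.

Lemma beta_cst (c : F) : beta c%:P%:P = c%:P%:P.
Proof. by rewrite betaC iotaC. Qed.

Lemma Hp_eq : Hp = (b ^+ q) ^+ e.-1 * K.
Proof.
rewrite /Hp /Pp /b (@hasse_main _ p l e f Qp (etrans (pchar_poly _ _) hp) he).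
rewrite /K -{1}(prednK he) exprSr; ring.
Qed.

Lemma beta_D : beta Dp = 'X ^+ (q * e) * E.
Proof.
rewrite /Dp rmorphB rmorphM beta_cst rmorphXn betaX /Pp rmorphM rmorphXn beta_b.
by rewrite /E exprMn -/Qt; ring.
Qed.

Lemma beta_HD m : beta (Hp * Dp ^+ m) = 'X ^+ (q * e.-1 + q * e * m) * Z m.
Proof.
rewrite rmorphM rmorphXn Hp_eq rmorphM !rmorphXn beta_b beta_D /Z.
rewrite !exprMn -!exprM exprD; ring.
Qed.

Lemma Hcoef m k : (m < M)%N -> (k <= q * e * m.+1)%N ->
  ps2_mul (hasse_y q P) (ps2_exp (ps2_sub (ps2_scale alpha (ps2_ypow F (q * e))) P) m) i k
  = ('X ^+ (q * e.-1 + q * e * m) * Z m)`_(k + i)`_i.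
Proof.
move=> hm hk.
have hMm : (q * e * m.+1 <= q * e * M)%N by rewrite leq_mul2l hm orbT.
rewrite (repM repH (repX m repDp)); try (rewrite /N; lia).
by rewrite -beta_HD coef_beta leq_addl addnK.
Qed.


Lemma term_gen m : (m < M)%N ->
  corA4_term p l e alpha P m i =
  if (q <= i)%N then (e%:R * alpha ^+ m.+1)^-1 * (Z m)`_(i - q)`_i else 0.
Proof.
move=> hm; have hq := q_gt0.
rewrite /corA4_term.
case: (leqP 2 (e * m.+1)) => hu.
  have -> : (q%:Z * ((e * m.+1)%:Z - 2) = Posz (q * (e * m.+1 - 2)))%R.
    have [w hw] : exists w, (e * m.+1 = w + 2)%N by exists (e * m.+1 - 2)%N; lia.
    by rewrite hw addnK PoszD addrK PoszM.
  rewrite /coef_y /ps2_scale Hcoef //; last by rewrite -mulnA leq_mul2l leq_subr orbT.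
  rewrite coefXnM.
  have h1 : (q * e.-1 + q * e * m + q = q * (e * m.+1))%N.
    case: (e) he => // e' _ /=; nia.
  have h2 : (q * (e * m.+1 - 2) + 2 * q = q * (e * m.+1))%N.
    by rewrite -mulnC -mulnDl subnK // mulnC.
  case: (leqP q i) => hi.
    rewrite ifN; last lia.
    have -> : (q * (e * m.+1 - 2) + i - (q * e.-1 + q * e * m) = i - q)%N by lia.
    by [].
  by rewrite ifT ?coef0 ?mulr0 //; lia.
have [e1 m0] : e = 1%N /\ m = 0%N.
  by move: hu; case: (e) he => [|[|e']] // _; case: (m) => // m'; rewrite ?mulSn ?mul1n /=; lia.
rewrite coef_y_neg; last by rewrite e1 m0; lia.
case: ifP => // hi.
rewrite /Z m0 e1 muln0 !expr0 mul1r mulr1 coef_beta ifN ?mulr0 //; lia.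
Qed.


Let L := (2 * i).+1.
Let T : R := (v * G) ^+ q.
Let U1 : R := \sum_(k < L) T ^+ k.
Let a : F := alpha^-1.
Let Y1pre : R := 1 - a%:P%:P * Qp.
Let U2pre : R := a%:P%:P * \sum_(k < L) Y1pre ^+ k.
Let Qqt : R := beta (Qp^`N(q)).
Let Ze : R := \sum_(m < M) (a ^+ m.+1)%:P%:P * Z m.
Let W0 : R := e%:R * U1 + 'X ^+ q * (beta U2pre * Qqt).

Lemma hV1q : V1 ^+ q = 1 - T.
Proof.
rewrite /V1 /T (exprDn_pchar _ _ (pchar_nat_exp l pcharR)) expr1n.
by rewrite (exprNn_pchar _ (pchar_nat_exp l pcharR)).
Qed.

Lemma hK : beta K = 'X ^+ q * V1 ^+ q * Qqt + e%:R * Qt.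
Proof. by rewrite /K rmorphD !rmorphM rmorph_nat rmorphXn beta_b exprMn. Qed.

Lemma f1 : (1 - T) * U1 = 1 - T ^+ L.
Proof. exact: telescope. Qed.

Lemma f2 : Qt * beta U2pre = 1 - beta Y1pre ^+ L.
Proof.
have pre : Qp * U2pre = 1 - Y1pre ^+ L.
  rewrite /U2pre mulrA -telescope; congr (_ * _).
  by rewrite /Y1pre; ring.
by rewrite /Qt -rmorphM pre rmorphB rmorph1 rmorphXn.
Qed.

Lemma Ze_eq : Ze = V1 ^+ (q * e.-1) * beta K * \sum_(m < M) (a%:P%:P) ^+ m.+1 * E ^+ m.
Proof.
rewrite /Ze mulr_sumr; apply: eq_bigr => m _.
by rewrite /Z !rmorphXn; ring.
Qed.

Lemma f3 : V1 ^+ q * Qt * Ze = beta K * (1 - (a%:P%:P) ^+ M * E ^+ M).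
Proof.
have ha1 : alpha%:P%:P * a%:P%:P = 1 :> R by rewrite -!rmorphM divff // !rmorph1.
rewrite -(telescope2 _ _ ha1) Ze_eq.
have -> : alpha%:P%:P - E = V1 ^+ (q * e) * Qt by rewrite /E; ring.
rewrite -{2}(prednK he) mulnS exprD; ring.
Qed.


Lemma c00beta (X : R) : c00 (beta X) = c00 X.
Proof. by rewrite /c00 coef_beta. Qed.

Lemma c00v : c00 v = 0.
Proof. by rewrite /c00 /v coefC /= coefX. Qed.

Lemma c00V1 : c00 V1 = 1.
Proof. by rewrite /V1 /c00 coefB coef1 coefB coef1 coef0M /v coefC /= coef0M coefX mul0r subr0. Qed.

Lemma c00Qt : c00 Qt = alpha.
Proof. by rewrite /Qt c00beta /c00 -repQ //; rewrite /N' /N; lia. Qed.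

Lemma ordT : vord 1 T.
Proof.
apply: vord1; rewrite -/(c00 T) /T c00X c00M c00v mul0r expr0n.
by rewrite eqn0Ngt q_gt0.
Qed.

Lemma ordY1 : vord 1 (beta Y1pre).
Proof.
apply: vord1; rewrite -/(c00 _) c00beta /Y1pre /c00 coefB coef1 coefB coef1 coef0M.
have hQp : Qp`_0`_0 = alpha by rewrite -c00Qt /Qt c00beta.
by rewrite coef0M hQp coefC /= coefC /= /a mulVf // subrr.
Qed.

Lemma ordE : vord 1 E.
Proof.
apply: vord1; rewrite /E coefB coefB coefC coefC /= -/(c00 _) c00M c00X c00V1 expr1n mul1r c00Qt.
exact: subrr.
Qed.


Lemma Ze_W0 : vord L (Ze - W0).
Proof.
have e3 : (1 - T ^+ L) * (1 - beta Y1pre ^+ L) * Ze =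
   (e%:R * U1 * (1 - beta Y1pre ^+ L) + 'X ^+ q * Qqt * beta U2pre * (1 - T ^+ L))
   * (1 - (a%:P%:P) ^+ M * E ^+ M).
  transitivity (U1 * beta U2pre * (V1 ^+ q * Qt * Ze)).
    by rewrite -f1 -f2 hV1q; ring.
  by rewrite f3 hK hV1q -f1 -f2; ring.
have -> : Ze - W0 =
  (T ^+ L + beta Y1pre ^+ L - T ^+ L * beta Y1pre ^+ L) * Ze
  + ((1 - T ^+ L) * (1 - beta Y1pre ^+ L) * Ze -
     (e%:R * U1 * (1 - beta Y1pre ^+ L) + 'X ^+ q * Qqt * beta U2pre * (1 - T ^+ L))
     * (1 - (a%:P%:P) ^+ M * E ^+ M))
  - e%:R * U1 * beta Y1pre ^+ L - 'X ^+ q * Qqt * beta U2pre * T ^+ L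
  - (e%:R * U1 * (1 - beta Y1pre ^+ L) + 'X ^+ q * Qqt * beta U2pre * (1 - T ^+ L))
     * ((a%:P%:P) ^+ M * E ^+ M).
  by rewrite /W0; ring.
rewrite e3 subrr addr0.
have o1 : vord L (T ^+ L) by apply: vordX; exact: ordT.
have o2 : vord L (beta Y1pre ^+ L) by apply: vordX; exact: ordY1.
have o3 : vord L ((a%:P%:P) ^+ M * E ^+ M).
  by apply: (vord_le hM); apply: vordMl; apply: vordX; exact: ordE.
apply: vordB; [apply: vordB; [apply: vordB|]|].
- apply: vordMr; apply: vordB; [apply: vordD => //|]; exact: vordMl.
- exact: vordMl.
- exact: vordMl.
- exact: vordMl.
Qed.


Lemma coefW0 : (q <= i)%N -> W0`_(i - q)`_i = (g ^+ q)`_(i - q) *+ e.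
Proof.
move=> hi; have hq := q_gt0.
rewrite /W0 !coefD.
rewrite mulr_natl !coefMn coefXnM.
have -> : (if (i - q < q)%N then 0 else (beta U2pre * Qqt)`_(i - q - q))`_i = 0.
  case: ifP => _; first by rewrite coef0.
  by rewrite /Qqt -rmorphM coef_beta ifN //; lia.
rewrite addr0; congr (_ *+ _).
rewrite /U1 coef_sum coef_sum.
have h1 : (1 < L)%N by rewrite /L; lia.
rewrite (bigD1 (Ordinal h1)) //= big1 ?addr0.
  rewrite /T expr1 exprMn /v /G -!rmorphXn coefCM coefXnM ltnNge hi /= coef_iota.
  by rewrite eqxx.
move=> k hk; rewrite /T -exprM exprMn /v /G -!rmorphXn coefCM coefXnM coef_iota.
case: ifP => // hik; case: eqP => // heq.
case/eqP: hk; apply: val_inj => /=.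
have : (q * k = q)%N by lia.
by rewrite -{2}[q]muln1 => /eqP; rewrite eqn_pmul2l // => /eqP.
Qed.


Lemma main_coef : ps1_sum M (corA4_term p l e alpha P) i = ps1_exp phi q i.
Proof.
have hq := q_gt0.
rewrite (rep1X q rep1f); last by rewrite /N' /N; lia.
rewrite /f exprMn coefXnM /ps1_sum.
rewrite (eq_bigr (fun m : 'I_M => if (q <= i)%N then
   (e%:R * alpha ^+ m.+1)^-1 * (Z m)`_(i - q)`_i else 0)); last first.
  by move=> m _; rewrite term_gen.
case: ltnP => hi.
  by rewrite big1 // => m _; rewrite leqNgt hi.
have -> : \sum_(m < M) (e%:R * alpha ^+ m.+1)^-1 * (Z m)`_(i - q)`_i
   = (e%:R)^-1 * Ze`_(i - q)`_i.
  rewrite /Ze !coef_sum mulr_sumr; apply: eq_bigr => m _.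
  by rewrite !coefCM invfM exprVn /a mulrA.
have z : (Ze - W0)`_(i - q)`_i = 0 by apply: Ze_W0; rewrite /L; lia.
have -> : Ze`_(i - q)`_i = W0`_(i - q)`_i.
  by apply/eqP; rewrite -subr_eq0 -coefB -coefB z.
rewrite coefW0 // [LHS]mulrC -mulr_natr; field.
by rewrite ?mul1r; exact: e_neq0.
Qed.

End Main.

Unset Implicit Arguments.
Theorem corollaryA4 (F : fieldType) (p : nat) (P Q : ps2 F) (phi : ps1 F)
    (l e : nat) (alpha : F) :
  p \in [pchar F] ->
  (0 < e)%N -> coprime p e ->
  phi 0%N = 0 ->
  Q 0%N 0%N = alpha -> alpha != 0 ->
  P = ps2_mul (ps2_exp (ps2_sub (ps2_ypow F 1) (ps2_of_t phi)) (p ^ l * e)) Q ->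
  ps1_series_to (corA4_term p l e alpha P) (ps1_exp phi (p ^ l)) /\
  (forall d : nat,
     hom_le d (ps1_exp phi (p ^ l)) =
     hom_le d (ps1_sum (2 * e * (d + p ^ l)).+1 (corA4_term p l e alpha P))).
Proof.
move=> hp he hcop hphi0 hQ ha hP; split.
  move=> i; exists (2 * i).+1 => M hM.
  exact: (main_coef hp he hcop hphi0 hQ ha hP).
move=> d; apply: functional_extensionality => i; rewrite /hom_le.
case: ifP => // hid.
by rewrite (main_coef hp he hcop hphi0 hQ ha hP) //; nia.
Qed.
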